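(* Let $G$ be a closed and continuous cyclic graph with vertex set $V$ and $\mathrm{wf}(G)=\frac pq$. Then for all $v\in V$ and $i,j\ge0$: (i) $f_i(v)\in V$; (ii) $\gamma_{i+j}(v)=\gamma_i(v)+\gamma_j(f_i(v))$; (iii) $f_{i+j}(v)=f_j(f_i(v))$.
   Context: $S^1=\mathbb{R}/\mathbb{Z}$ (points identified with $[0,1)$); $\preceq$/$\prec$ clockwise order; $\vec d(p,q)\in[0,1)$ clockwise distance. A directed graph has no loops and no pair of opposite edges; $N^+[G,v]=\{v\}\cup\{w:v\to w\}$. A directed graph with vertex set $V\subseteq S^1$ is cyclic if whenever $v\to u$ is an edge, $v\to w$ and $w\to u$ are edges for all $w\in V$ with $v\prec w\prec u\prec v$. Winding fraction: for finite cyclic $G$, $\mathrm{wf}(G)=\sup\{k/n:\exists$ cyclic homomorphism $C_n^k\to G\}$ ($C_n^k$: vertices $0..n-1$, edges $i\to i+s\bmod n$, $1\le s\le k<n/2$); in general, the supremum over finite induced subgraphs. For $m\ge1$, $\gamma_m(v_0)=\sup\{\sum_{i=0}^{m-1}\vec d(v_i,v_{i+1}): v_{i+1}\in N^+[G,v_i]\}$, $\gamma_0=0$, and $f_m(v)=(v+\gamma_m(v))\bmod 1\in S^1$. $G$ is closed if $V$ is closed in $S^1$, and continuous if every $\gamma_m:V\to\mathbb{R}$ is continuous. *)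

(* Defs.v *)
From Stdlib Require Import Reals Lra Lia List ClassicalEpsilon.
From Stdlib Require Import Rtopology.
Open Scope R_scope.

(** Points of S^1 = R/Z are represented by reals in [0,1).
    [frac x] is the representative in [0,1) of x mod 1 (Int_part = floor). *)
Definition frac (x : R) : R := x - IZR (Int_part x).

(** clockwise distance d(p,q) in [0,1) (clockwise = increasing direction). *)
Definition cwd (p q : R) : R := frac (q - p).

(** v < w < u < v in the cyclic order: w lies strictly inside the clockwise
    open arc from v to u. *)
Definition cyc_between (v w u : R) : Prop := 0 < cwd v w < cwd v u.

Definition circ_dist (p q : R) : R := Rmin (cwd p q) (cwd q p).

Definition digraph_on_circle (V : R -> Prop) (E : R -> R -> Prop) : Prop :=
  (forall x, V x -> 0 <= x < 1) /\
  (forall x y, E x y -> V x /\ V y) /\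
  (forall x, ~ E x x) /\
  (forall x y, E x y -> ~ E y x).

Definition is_cyclic_graph (V : R -> Prop) (E : R -> R -> Prop) : Prop :=
  digraph_on_circle V E /\
  forall v u, E v u -> forall w, V w -> cyc_between v w u -> E v w /\ E w u.

Fixpoint sumR (f : nat -> R) (m : nat) : R :=
  match m with O => 0 | S m' => sumR f m' + f m' end.

(** cyclic homomorphism C_n^k -> G[W] (W a finite set of vertices given as a
    list): phi maps 0..n-1 into W, every edge i -> i+s mod n (1<=s<=k) to an
    edge of G, and phi(0) <= phi(1) <= ... <= phi(n-1) <= phi(0) winds once
    around the circle clockwise (total clockwise winding exactly 1). *)
Definition cyclic_hom (V : R -> Prop) (E : R -> R -> Prop) (W : list R)
    (n k : nat) (phi : nat -> R) : Prop :=
  (forall i, (i < n)%nat -> In (phi i) W) /\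
  (forall i s, (i < n)%nat -> (1 <= s <= k)%nat ->
      E (phi i) (phi ((i + s) mod n)%nat)) /\
  sumR (fun i => cwd (phi i) (phi ((i + 1) mod n)%nat)) n = 1.

Definition wf_values (V : R -> Prop) (E : R -> R -> Prop) (W : list R)
    (r : R) : Prop :=
  exists n k phi, (1 <= k)%nat /\ (2 * k < n)%nat /\
    cyclic_hom V E W n k phi /\ r = INR k / INR n.

Definition wf_finite_is (V : R -> Prop) (E : R -> R -> Prop) (W : list R)
    (x : R) : Prop :=
  is_lub (fun r => r = 0 \/ wf_values V E W r) x.

Definition wf_is (V : R -> Prop) (E : R -> R -> Prop) (x : R) : Prop :=
  is_lub (fun y => exists W : list R, (forall w, In w W -> V w) /\
                                      wf_finite_is V E W y) x.

(** supremum (the least upper bound whenever it exists) *)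
Definition lub (A : R -> Prop) : R :=
  epsilon (inhabits 0) (fun x => is_lub A x).

(** walks v_0 = v0, v_{i+1} in N^+[G, v_i] of length m *)
Definition closed_nbhd_walk (E : R -> R -> Prop) (m : nat) (v0 : R)
    (w : nat -> R) : Prop :=
  w O = v0 /\ forall i, (i < m)%nat -> w (S i) = w i \/ E (w i) (w (S i)).

Definition gamma (E : R -> R -> Prop) (m : nat) (v0 : R) : R :=
  match m with
  | O => 0
  | S _ => lub (fun s => exists w, closed_nbhd_walk E m v0 w /\
                          s = sumR (fun i => cwd (w i) (w (S i))) m)
  end.

Definition fm (E : R -> R -> Prop) (m : nat) (v : R) : R :=
  frac (v + gamma E m v).

(** V closed in S^1 : its preimage under the quotient map R -> R/Z is closed *)
Definition closed_graph (V : R -> Prop) : Prop :=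
  closed_set (fun x => V (frac x)).

Definition continuous_graph (V : R -> Prop) (E : R -> R -> Prop) : Prop :=
  forall (m : nat) (v : R), V v ->
    forall eps, 0 < eps -> exists delta, 0 < delta /\
      forall w, V w -> circ_dist v w < delta ->
        Rabs (gamma E m w - gamma E m v) < eps.

(* Main.v *)
Require Import Defs.
From Stdlib Require Import Reals Lra Lia Classical ClassicalEpsilon Rtopology.
Open Scope R_scope.

Lemma frac_unique x k : IZR k <= x < IZR k + 1 -> frac x = x - IZR k.
Proof.
  intros [H1 H2]. unfold frac. destruct (base_Int_part x) as [B1 B2].
  assert (Int_part x = k).
  { assert (IZR (Int_part x) < IZR (k + 1)) by (rewrite plus_IZR; lra).
    assert (IZR k < IZR (Int_part x + 1)) by (rewrite plus_IZR; lra).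
    apply lt_IZR in H; apply lt_IZR in H0. lia. }
  subst; ring.
Qed.

Lemma frac_range x : 0 <= frac x < 1.
Proof. unfold frac. destruct (base_Int_part x). lra. Qed.

Lemma frac_id x : 0 <= x < 1 -> frac x = x.
Proof. intros H. rewrite (frac_unique x 0); simpl; lra. Qed.

Lemma frac_shift x k : frac (x + IZR k) = frac x.
Proof.
  destruct (base_Int_part x).
  rewrite (frac_unique (x + IZR k) (Int_part x + k)).
  - unfold frac. rewrite plus_IZR. ring.
  - rewrite plus_IZR. lra.
Qed.

Lemma frac_add_l a b : frac (frac a + b) = frac (a + b).
Proof.
  replace (frac a + b) with ((a + b) + IZR (- Int_part a))
    by (unfold frac; rewrite opp_IZR; ring).
  apply frac_shift.
Qed.

Lemma frac_add_r a b : frac (a + frac b) = frac (a + b).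
Proof. rewrite Rplus_comm, frac_add_l. f_equal; ring. Qed.

Lemma frac_sub_r a b : frac (a - frac b) = frac (a - b).
Proof.
  replace (a - frac b) with ((a - b) + IZR (Int_part b))
    by (unfold frac; ring).
  apply frac_shift.
Qed.

Lemma cwd_self x : cwd x x = 0.
Proof. unfold cwd. replace (x - x) with 0 by ring. apply frac_id. lra. Qed.

Lemma cwd_range x y : 0 <= cwd x y < 1.
Proof. apply frac_range. Qed.

Lemma cwd_end x y : 0 <= y < 1 -> frac (x + cwd x y) = y.
Proof.
  intros H. unfold cwd. rewrite frac_add_r. replace (x + (y - x)) with y by ring.
  apply frac_id; auto.
Qed.

Lemma sumR_ext f g m : (forall k, (k < m)%nat -> f k = g k) -> sumR f m = sumR g m.
Proof.
  induction m; intros H; simpl; auto.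
  rewrite IHm by (intros; apply H; lia). rewrite H by lia. auto.
Qed.

Lemma sumR_split f i j : sumR f (i + j) = sumR f i + sumR (fun k => f (i + k)%nat) j.
Proof.
  induction j; simpl.
  - rewrite Nat.add_0_r. ring.
  - rewrite Nat.add_succ_r. simpl. rewrite IHj. ring.
Qed.

Lemma sumR_front f j : sumR f (S j) = f 0%nat + sumR (fun k => f (S k)) j.
Proof. change (S j) with (1 + j)%nat. rewrite sumR_split. simpl. ring. Qed.

Lemma sumR_bounds f m : (forall k, 0 <= f k < 1) -> 0 <= sumR f m <= INR m.
Proof.
  intros H. induction m; simpl sumR.
  - simpl; lra.
  - rewrite S_INR. specialize (H m). lra.
Qed.

Lemma sumR_zero f m : (forall k, f k = 0) -> sumR f m = 0.
Proof. intros H; induction m; simpl; auto. rewrite IHm, H; ring. Qed.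

Definition wsum (w : nat -> R) (m : nat) : R := sumR (fun i => cwd (w i) (w (S i))) m.

Definition Aset E m v := fun s => exists w, closed_nbhd_walk E m v w /\ s = wsum w m.

Lemma wsum_bounds w m : 0 <= wsum w m <= INR m.
Proof. apply sumR_bounds. intros; apply cwd_range. Qed.

Lemma const_walk E m v : closed_nbhd_walk E m v (fun _ => v) /\ wsum (fun _ => v) m = 0.
Proof.
  split. split; auto. apply sumR_zero. intros; apply cwd_self.
Qed.

Lemma gamma_lub E m v : is_lub (Aset E m v) (gamma E m v).
Proof.
  destruct m as [|m].
  - simpl. split.
    + intros s [w [_ ->]]. unfold wsum; simpl. lra.
    + intros b Hb. apply Hb. exists (fun _ => v). split; [apply const_walk|]. reflexivity.
  - change (is_lub (Aset E (S m) v) (Defs.lub (Aset E (S m) v))).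
    unfold Defs.lub. apply epsilon_spec.
    destruct (completeness (Aset E (S m) v)) as [x Hx].
    + exists (INR (S m)). intros s [w [_ ->]]. apply (proj2 (wsum_bounds w (S m))).
    + exists 0. exists (fun _ => v). split; [apply const_walk|]. symmetry; apply (const_walk E (S m) v).
    + exists x; exact Hx.
Qed.

Lemma gamma_ub E m v w : closed_nbhd_walk E m v w -> wsum w m <= gamma E m v.
Proof. intros H. apply (proj1 (gamma_lub E m v)). exists w; auto. Qed.

Lemma gamma_ge0 E m v : 0 <= gamma E m v.
Proof.
  rewrite <- (proj2 (const_walk E m v)). apply gamma_ub. apply const_walk.
Qed.

Lemma gamma_approx E m v eps : 0 < eps ->
  exists w, closed_nbhd_walk E m v w /\ gamma E m v - eps < wsum w m.
Proof.
  intros He. apply NNPP. intros HN.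
  destruct (gamma_lub E m v) as [_ H].
  assert (gamma E m v <= gamma E m v - eps). 2: lra.
  apply H. intros s [w [Hw ->]].
  apply Rnot_lt_le. intros Hl. apply HN. exists w; auto.
Qed.

Lemma walk_V (V : R -> Prop) E m v w
  (HV01 : forall x, V x -> 0 <= x < 1)
  (HEV : forall x y, E x y -> V x /\ V y) :
  closed_nbhd_walk E m v w -> V v ->
  forall k, (k <= m)%nat -> V (w k) /\ w k = frac (v + wsum w k).
Proof.
  intros [H0 Hs] Hv k. induction k; intros Hk.
  - unfold wsum; simpl. rewrite H0. split; auto.
    rewrite Rplus_0_r, frac_id; auto.
  - destruct IHk as [IV IE]; [lia|].
    assert (VS : V (w (S k))).
    { destruct (Hs k) as [Hq|Hq]; [lia| rewrite Hq; auto | apply (HEV _ _ Hq)]. }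
    split; auto.
    unfold wsum; simpl sumR. fold (wsum w k).
    replace (v + (wsum w k + cwd (w k) (w (S k)))) with ((v + wsum w k) + cwd (w k) (w (S k))) by ring.
    rewrite <- frac_add_l, <- IE. symmetry. apply cwd_end. auto.
Qed.

Lemma walk_split E i j v w : closed_nbhd_walk E (i + j) v w ->
  closed_nbhd_walk E i v w /\ closed_nbhd_walk E j (w i) (fun k => w (i + k)%nat) /\
  wsum w (i + j) = wsum w i + wsum (fun k => w (i + k)%nat) j.
Proof.
  intros [H0 Hs]. split; [|split].
  - split; auto. intros; apply Hs; lia.
  - split. rewrite Nat.add_0_r; auto. intros k Hk. rewrite Nat.add_succ_r. apply Hs; lia.
  - unfold wsum. rewrite sumR_split. f_equal. apply sumR_ext. intros k _.
    rewrite Nat.add_succ_r. reflexivity.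
Qed.

Lemma walk_ext E m v w w' : (forall k, (k <= m)%nat -> w k = w' k) ->
  closed_nbhd_walk E m v w -> closed_nbhd_walk E m v w' /\ wsum w m = wsum w' m.
Proof.
  intros He [H0 Hs]. split. split.
  - rewrite <- He by lia; auto.
  - intros k Hk. rewrite <- !He by lia. auto.
  - unfold wsum. apply sumR_ext. intros k Hk. rewrite !He by lia. auto.
Qed.

Lemma walk_concat E i j v w1 w2 : closed_nbhd_walk E i v w1 ->
  closed_nbhd_walk E j (w1 i) w2 ->
  exists w, closed_nbhd_walk E (i + j) v w /\ wsum w (i + j) = wsum w1 i + wsum w2 j.
Proof.
  intros H1 H2.
  set (w := fun k => if (k <=? i)%nat then w1 k else w2 (k - i)%nat).
  assert (E1 : forall k, (k <= i)%nat -> w k = w1 k).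
  { intros k Hk. unfold w. destruct (Nat.leb_spec k i); [auto|lia]. }
  assert (E2 : forall k, w (i + k)%nat = w2 k).
  { intros k. unfold w. destruct (Nat.leb_spec (i + k) i).
    - assert (k = 0%nat) by lia. subst. rewrite Nat.add_0_r. symmetry; apply H2.
    - f_equal. lia. }
  destruct (walk_ext E i v w1 w) as [W1 S1]; [intros; symmetry; auto| auto|].
  destruct (walk_ext E j (w1 i) w2 (fun k => w (i + k)%nat)) as [W2 S2]; [intros; symmetry; auto| auto|].
  exists w. split.
  - destruct W1 as [A0 As]. destruct W2 as [B0 Bs]. split; auto.
    intros k Hk. destruct (Nat.lt_ge_cases k i).
    + apply As; lia.
    + specialize (Bs (k - i)%nat ltac:(lia)).
      replace (i + (k - i))%nat with k in Bs by lia.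
      replace (i + S (k - i))%nat with (S k) in Bs by lia. auto.
  - rewrite S1, S2. unfold wsum. rewrite sumR_split. f_equal. apply sumR_ext. intros k _. rewrite Nat.add_succ_r. auto.
Qed.

Lemma Qlem (V : R -> Prop) E
  (HV01 : forall x, V x -> 0 <= x < 1)
  (HEV : forall x y, E x y -> V x /\ V y)
  (Hcyc : forall v u, E v u -> forall w, V w -> cyc_between v w u -> E v w /\ E w u) :
  forall j x w, closed_nbhd_walk E j x w -> V x -> forall d, 0 <= d -> V (frac (x + d)) ->
  wsum w j <= d \/ exists w', closed_nbhd_walk E j (frac (x + d)) w' /\ wsum w j <= d + wsum w' j.
Proof.
  induction j as [|j IH]; intros x w Hw Hx d Hd Hy.
  - left. unfold wsum; simpl. lra.
  - destruct (walk_split E 1 j x w Hw) as [W1 [Wt Hs]].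
    change (1 + j)%nat with (S j) in Hs.
    assert (Hs1 : wsum w 1 = cwd x (w 1%nat)).
    { unfold wsum; simpl. rewrite (proj1 Hw). ring. }
    rewrite Hs1 in Hs.
    set (c := cwd x (w 1%nat)) in *.
    set (t := wsum (fun k => w (1 + k)%nat) j) in *.
    assert (Hst : w 1%nat = w 0%nat \/ E (w 0%nat) (w 1%nat)) by (apply (proj2 Hw); lia).
    rewrite (proj1 Hw) in Hst.
    assert (V1 : V (w 1%nat)) by (destruct Hst as [-> | He]; [auto| apply (HEV _ _ He)]).
    assert (Hc := cwd_range x (w 1%nat)). fold c in Hc.
    assert (Hw1 : w 1%nat = frac (x + c)) by (symmetry; apply cwd_end; auto).
    destruct (Rle_dec c d) as [Hcd|Hcd].
    + assert (Hy' : frac (w 1%nat + (d - c)) = frac (x + d)).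
      { rewrite Hw1, frac_add_l. f_equal. ring. }
      destruct (IH (w 1%nat) _ Wt V1 (d - c) ltac:(lra)) as [HL | [w' [Hw' HR]]].
      * rewrite Hy'; auto.
      * left. fold t in HL. lra.
      * right. rewrite Hy' in Hw'.
        destruct (walk_concat E 1 j (frac (x + d)) (fun _ => frac (x + d)) w') as [w'' [Hw'' Hs'']].
        { pose proof (proj1 (const_walk E 1 (frac (x + d)))) as HH. exact HH. }
        { exact Hw'. }
        exists w''. split; [exact Hw''|].
        change (1 + j)%nat with (S j) in Hs''. rewrite Hs''.
        rewrite (proj2 (const_walk E 1 (frac (x + d)))). fold t in HR. lra.
    + destruct (Req_dec d 0) as [Hd0|Hd0].
      * right. subst d. rewrite Rplus_0_r, frac_id by auto. exists w. split; auto. lra.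
      * assert (HE : E x (w 1%nat)).
        { destruct Hst as [Hq|Hq]; auto. exfalso. unfold c in Hcd. rewrite Hq, cwd_self in Hcd. lra. }
        assert (Hcxy : cwd x (frac (x + d)) = d).
        { unfold cwd, Rminus. rewrite frac_add_l.
          replace (x + d + - x) with d by ring. apply frac_id. lra. }
        destruct (Hcyc x (w 1%nat) HE (frac (x + d)) Hy) as [_ HE2].
        { unfold cyc_between. rewrite Hcxy. fold c. lra. }
        assert (Hcy : cwd (frac (x + d)) (w 1%nat) = c - d).
        { unfold cwd at 1. rewrite frac_sub_r.
          replace (w 1%nat - (x + d)) with (frac (w 1%nat - x) + - d + IZR (Int_part (w 1%nat - x)))
            by (unfold frac; ring).
          rewrite frac_shift. fold (cwd x (w 1%nat)). fold c. apply frac_id. lra. }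
        set (w1 := fun k => match k with O => frac (x + d) | _ => w 1%nat end).
        destruct (walk_concat E 1 j (frac (x + d)) w1 (fun k => w (1 + k)%nat)) as [w'' [Hw'' Hs'']].
        { split; auto. intros k Hk. assert (k = 0%nat) by lia. subst k. right. exact HE2. }
        { exact Wt. }
        right. exists w''. split; [exact Hw''|].
        change (1 + j)%nat with (S j) in Hs''. rewrite Hs''.
        assert (wsum w1 1 = c - d) by (unfold wsum; simpl; rewrite Hcy; ring).
        rewrite H. fold t. lra.
Qed.

Lemma mono (V : R -> Prop) E
  (HV01 : forall x, V x -> 0 <= x < 1)
  (HEV : forall x y, E x y -> V x /\ V y)
  (Hcyc : forall v u, E v u -> forall w, V w -> cyc_between v w u -> E v w /\ E w u) :
  forall j x d, V x -> 0 <= d -> V (frac (x + d)) ->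
  gamma E j x <= d + gamma E j (frac (x + d)).
Proof.
  intros j x d Hx Hd Hy. apply (proj2 (gamma_lub E j x)).
  intros s [w [Hw ->]].
  destruct (Qlem V E HV01 HEV Hcyc j x w Hw Hx d Hd Hy) as [H | [w' [Hw' H]]].
  - pose proof (gamma_ge0 E j (frac (x + d))). lra.
  - pose proof (gamma_ub E j _ w' Hw'). lra.
Qed.

Theorem mainTheorem10 (V : R -> Prop) (E : R -> R -> Prop) (p q : nat)
  (HG : is_cyclic_graph V E)
  (Hclosed : closed_graph V)
  (Hcont : continuous_graph V E)
  (Hq : (0 < q)%nat)
  (Hwf : wf_is V E (INR p / INR q)) :
  forall v, V v -> forall i j : nat,
    V (fm E i v) /\
    gamma E (i + j) v = gamma E i v + gamma E j (fm E i v) /\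
    fm E (i + j) v = fm E j (fm E i v).
Proof.
  destruct HG as [[HV01 [HEV _]] Hcyc].
  assert (Hfm : forall v i, V v -> V (fm E i v)).
  { intros v i Hv. unfold fm. apply NNPP. intros HN.
    destruct (Hclosed (v + gamma E i v) HN) as [delta Hd].
    destruct (gamma_approx E i v delta (cond_pos delta)) as [w [Hw Hs]].
    pose proof (gamma_ub E i v w Hw).
    destruct (walk_V V E i v w HV01 HEV Hw Hv i (le_n i)) as [HVi HEi].
    apply (Hd (v + wsum w i)).
    - unfold disc. apply Rabs_def1; lra.
    - simpl. rewrite <- HEi. exact HVi. }
  intros v Hv i j.
  assert (Vf := Hfm v i Hv).
  set (f := fm E i v) in *.
  assert (Hgam : gamma E (i + j) v = gamma E i v + gamma E j f).
  { apply Rle_antisym.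
    - apply (proj2 (gamma_lub E (i + j) v)). intros s [w [Hw ->]].
      destruct (walk_split E i j v w Hw) as [W1 [W2 Hs]]. rewrite Hs.
      pose proof (gamma_ub E i v w W1).
      pose proof (gamma_ub E j _ _ W2).
      destruct (walk_V V E (i + j) v w HV01 HEV Hw Hv i ltac:(lia)) as [HVi HEi].
      assert (Hy : frac (w i + (gamma E i v - wsum w i)) = f).
      { rewrite HEi, frac_add_l. unfold f, fm. f_equal. ring. }
      pose proof (mono V E HV01 HEV Hcyc j (w i) (gamma E i v - wsum w i) HVi ltac:(lra)
                    ltac:(rewrite Hy; exact Vf)) as HM.
      rewrite Hy in HM. lra.
    - apply Rnot_lt_le. intros Hlt.
      set (eps := gamma E i v + gamma E j f - gamma E (i + j) v).
      assert (He : 0 < eps) by (unfold eps; lra).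
      destruct (Hcont j f Vf (eps / 3) ltac:(lra)) as [delta [Hdel Hc]].
      set (e1 := Rmin (Rmin delta (eps / 3)) (1 / 2)).
      assert (He1 : 0 < e1) by (unfold e1; repeat apply Rmin_pos; lra).
      assert (e1 <= delta /\ e1 <= eps / 3 /\ e1 <= 1/2).
      { unfold e1. pose proof (Rmin_l (Rmin delta (eps / 3)) (1 / 2)).
        pose proof (Rmin_r (Rmin delta (eps / 3)) (1 / 2)).
        pose proof (Rmin_l delta (eps / 3)). pose proof (Rmin_r delta (eps / 3)). lra. }
      destruct (gamma_approx E i v e1 He1) as [w1 [Hw1 Hs1]].
      pose proof (gamma_ub E i v w1 Hw1).
      destruct (walk_V V E i v w1 HV01 HEV Hw1 Hv i (le_n i)) as [HVi HEi].
      assert (Hcd : circ_dist f (w1 i) < delta).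
      { unfold circ_dist. eapply Rle_lt_trans. apply Rmin_r.
        unfold cwd. rewrite HEi. unfold f, fm. rewrite frac_sub_r. unfold Rminus. rewrite frac_add_l.
        replace (v + gamma E i v + - (v + wsum w1 i)) with (gamma E i v - wsum w1 i) by ring.
        rewrite frac_id by lra. lra. }
      specialize (Hc (w1 i) HVi Hcd).
      destruct (gamma_approx E j (w1 i) (eps / 3) ltac:(lra)) as [w2 [Hw2 Hs2]].
      destruct (walk_concat E i j v w1 w2 Hw1 Hw2) as [w [Hw Hsw]].
      pose proof (gamma_ub E (i + j) v w Hw).
      apply Rabs_def2 in Hc. unfold eps in *. lra. }
  split; [exact Vf|]. split; [exact Hgam|].
  unfold fm at 1. rewrite Hgam.
  change (frac (v + (gamma E i v + gamma E j f)) = frac (f + gamma E j f)).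
  assert (Hf : f = frac (v + gamma E i v)) by reflexivity.
  rewrite Hf at 2. rewrite frac_add_l. f_equal. ring.
Qed.
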